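(* Let $K_0=0$ and let $\Omega\subset\mathbb R^d$ be a bounded convex domain with $C^1$ boundary, with inner unit normal $\nu(X)$ at $X\in\partial\Omega$. Define $$h_*(x)=\inf_{X\in\partial\Omega}\big[h_0+\lambda_0\,\nu(X)\cdot(x-X)\big],\qquad x\in\mathbb R^d$$ (equivalently, the lower envelope of all affine functions $H$ with $|\nabla H|=\lambda_0$, $H\ge h_0$ on $\Omega$ and $H(X)=h_0$ for some $X\in\partial\Omega$). Then $h_*$ (restricted to $\mathbb R^d\setminus\Omega$) is a weak solution of $\det D^2(-u)=0$ in $\{u>0\}\setminus\overline\Omega$, $u=h_0$ on $\partial\Omega$, $|\nabla u|=\lambda_0$ on $\Gamma_u$.
   Context: Setting: $d\ge 2$; $h_0>0$, $\lambda_0>0$ constants. For $u:\mathbb R^d\setminus\Omega\to\mathbb R$ let $U$ denote the function equal to $u$ off $\Omega$ and to $h_0$ on $\Omega$; $u$ is called concave if $U$ is concave on $\mathbb R^d$. Write $\{u>0\}$ for $\{U>0\}$ and $\Gamma_u=\partial\{u>0\}\setminus\overline\Omega$. For a convex function $f$ on an open set $D$, $\omega_x(f)=\{p: f(y)\ge f(x)+p\cdot(y-x)\ \forall y\in D\}$ and $\omega_E(f)=\bigcup_{x\in E}\omega_x(f)$. A concave $u$ is a weak solution (with $K_0=0$) if: (a) $|\omega_E(-u)|=0$ for every Borel $E\subset\{u>0\}\setminus\overline\Omega$ (gradient mapping of $-u$ on $\{u>0\}\setminus\overline\Omega$); (b) $u=h_0$ on $\partial\Omega$; (c) at every $x_0\in\Gamma_u$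 at which the convex set $\{u>0\}$ has a unique supporting hyperplane, with inner unit normal $\nu$, $\lim_{t\downarrow 0}u(x_0+t\nu)/t=\lambda_0$. *)

(* Defs.v *)
From Stdlib Require Import Reals Lra ClassicalEpsilon.
Open Scope R_scope.

(* Points of R^d are represented by functions nat -> R vanishing at indices >= d. *)
Definition pt := nat -> R.
Definition in_Rd (d : nat) (x : pt) : Prop := forall i, (d <= i)%nat -> x i = 0.

Fixpoint dot (d : nat) (x y : pt) : R :=
  match d with O => 0 | S n => dot n x y + x n * y n end.
Definition norm (d : nat) (x : pt) : R := sqrt (dot d x x).
Definition vadd (x y : pt) : pt := fun i => x i + y i.
Definition vsub (x y : pt) : pt := fun i => x i - y i.
Definition vscal (a : R) (x : pt) : pt := fun i => a * x i.
Definition veq (d : nat) (x y : pt) : Prop := forall i, (i < d)%nat -> x i = y i.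

Definition open_Rd (d : nat) (S : pt -> Prop) : Prop :=
  forall x, S x -> in_Rd d x /\
    exists r, r > 0 /\ forall y, in_Rd d y -> norm d (vsub y x) < r -> S y.
Definition closure (d : nat) (S : pt -> Prop) (x : pt) : Prop :=
  in_Rd d x /\ forall eps, eps > 0 -> exists y, S y /\ norm d (vsub y x) < eps.
Definition bdry (d : nat) (S : pt -> Prop) (x : pt) : Prop :=
  closure d S x /\ closure d (fun y => in_Rd d y /\ ~ S y) x.
Definition connected (d : nat) (S : pt -> Prop) : Prop :=
  forall A B : pt -> Prop, open_Rd d A -> open_Rd d B ->
    (forall x, S x -> A x \/ B x) -> (forall x, S x -> A x -> B x -> False) ->
    (exists x, S x /\ A x) -> (exists x, S x /\ B x) -> False.
Definition convex_set (d : nat) (S : pt -> Prop) : Prop :=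
  forall x y t, S x -> S y -> 0 <= t <= 1 -> S (vadd (vscal t x) (vscal (1 - t) y)).
Definition bounded_set (d : nat) (S : pt -> Prop) : Prop :=
  exists M, forall x, S x -> norm d x <= M.

Definition has_grad (d : nat) (f : pt -> R) (g x : pt) : Prop :=
  in_Rd d g /\ forall eps, eps > 0 -> exists delta, delta > 0 /\
    forall y, in_Rd d y -> norm d (vsub y x) < delta ->
      Rabs (f y - f x - dot d g (vsub y x)) <= eps * norm d (vsub y x).
Definition C1_on_ball (d : nat) (rho : pt -> R) (G : pt -> pt) (c : pt) (r : R) : Prop :=
  forall x, in_Rd d x -> norm d (vsub x c) < r ->
    has_grad d rho (G x) x /\
    (forall eps, eps > 0 -> exists delta, delta > 0 /\
       forall y, in_Rd d y -> norm d (vsub y c) < r -> norm d (vsub y x) < delta ->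
         norm d (vsub (G y) (G x)) < eps).

Definition C1_domain_inner_normal (d : nat) (Om : pt -> Prop) (nu : pt -> pt) : Prop :=
  forall X, bdry d Om X -> exists r rho G, r > 0 /\ C1_on_ball d rho G X r /\
    (forall x, in_Rd d x -> norm d (vsub x X) < r -> (Om x <-> rho x < 0)) /\
    norm d (G X) <> 0 /\ in_Rd d (nu X) /\
    veq d (nu X) (vscal (- / norm d (G X)) (G X)).

Definition is_inf (E : R -> Prop) (m : R) : Prop :=
  (forall v, E v -> m <= v) /\ (forall m', (forall v, E v -> m' <= v) -> m' <= m).

Inductive borel (d : nat) : (pt -> Prop) -> Prop :=
| borel_open S : open_Rd d S -> borel d S
| borel_compl S : borel d S -> borel d (fun x => in_Rd d x /\ ~ S x)
| borel_union (F : nat -> pt -> Prop) : (forall n, borel d (F n)) -> borel d (fun x => exists n, F n x)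
| borel_ext S T : borel d S -> (forall x, in_Rd d x -> (S x <-> T x)) -> borel d T.

Fixpoint box_vol (d : nat) (a b : pt) : R :=
  match d with O => 1 | S n => box_vol n a b * (b n - a n) end.
Definition null_set (d : nat) (S : pt -> Prop) : Prop :=
  forall eps, eps > 0 -> exists a b : nat -> pt,
    (forall k i, (i < d)%nat -> a k i <= b k i) /\
    (forall x, in_Rd d x -> S x -> exists k, forall i, (i < d)%nat -> a k i <= x i <= b k i) /\
    (forall N, sum_f_R0 (fun k => box_vol d (a k) (b k)) N < eps).

Definition ext (Om : pt -> Prop) (h0 : R) (u : pt -> R) (x : pt) : R :=
  if excluded_middle_informative (Om x) then h0 else u x.
Definition concave_on_Rd (d : nat) (f : pt -> R) : Prop :=
  forall x y t, in_Rd d x -> in_Rd d y -> 0 <= t <= 1 ->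
    f (vadd (vscal t x) (vscal (1 - t) y)) >= t * f x + (1 - t) * f y.
Definition pos_set (d : nat) (Om : pt -> Prop) (h0 : R) (u : pt -> R) (x : pt) : Prop :=
  in_Rd d x /\ ext Om h0 u x > 0.
Definition free_region (d : nat) (Om : pt -> Prop) (h0 : R) (u : pt -> R) (x : pt) : Prop :=
  pos_set d Om h0 u x /\ ~ closure d Om x.
Definition subgrad (d : nat) (f : pt -> R) (D : pt -> Prop) (x p : pt) : Prop :=
  in_Rd d p /\ forall y, D y -> f y >= f x + dot d p (vsub y x).
Definition grad_image (d : nat) (f : pt -> R) (D E : pt -> Prop) (p : pt) : Prop :=
  exists x, E x /\ subgrad d f D x p.
Definition Gamma (d : nat) (Om : pt -> Prop) (h0 : R) (u : pt -> R) (x : pt) : Prop :=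
  bdry d (pos_set d Om h0 u) x /\ ~ closure d Om x.
Definition supp_normal (d : nat) (S : pt -> Prop) (x0 n : pt) : Prop :=
  in_Rd d n /\ norm d n = 1 /\ forall y, S y -> dot d n (vsub y x0) >= 0.

Definition weak_solution (d : nat) (Om : pt -> Prop) (h0 lam0 : R) (u : pt -> R) : Prop :=
  concave_on_Rd d (ext Om h0 u) /\
  (forall E, borel d E -> (forall x, E x -> free_region d Om h0 u x) ->
     null_set d (grad_image d (fun x => - ext Om h0 u x) (free_region d Om h0 u) E)) /\
  (forall X, bdry d Om X -> u X = h0) /\
  (forall x0 nu, Gamma d Om h0 u x0 -> supp_normal d (pos_set d Om h0 u) x0 nu ->
     (forall n, supp_normal d (pos_set d Om h0 u) x0 n -> veq d n nu) ->
     forall eps, eps > 0 -> exists delta, delta > 0 /\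
       forall t, 0 < t < delta ->
         Rabs (ext Om h0 u (vadd x0 (vscal t nu)) / t - lam0) < eps).

(* Main.v *)
Require Import Defs.
From Stdlib Require Import Reals Lra Lia Psatz FunctionalExtensionality ClassicalEpsilon Classical Arith ZArith.
Open Scope R_scope.


Ltac pteq := apply functional_extensionality; intro; unfold vsub, vadd, vscal; ring.

Lemma dot_sym d x y : dot d x y = dot d y x.
Proof. induction d; simpl; [ring| rewrite IHd; ring]. Qed.
Lemma dot_add_l d x y z : dot d (vadd x y) z = dot d x z + dot d y z.
Proof. induction d; simpl; [ring| rewrite IHd; unfold vadd; ring]. Qed.
Lemma dot_sub_l d x y z : dot d (vsub x y) z = dot d x z - dot d y z.
Proof. induction d; simpl; [ring| rewrite IHd; unfold vsub; ring]. Qed.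
Lemma dot_scal_l d a x z : dot d (vscal a x) z = a * dot d x z.
Proof. induction d; simpl; [ring| rewrite IHd; unfold vscal; ring]. Qed.
Lemma dot_add_r d x y z : dot d z (vadd x y) = dot d z x + dot d z y.
Proof. rewrite !(dot_sym d z); apply dot_add_l. Qed.
Lemma dot_sub_r d x y z : dot d z (vsub x y) = dot d z x - dot d z y.
Proof. rewrite !(dot_sym d z); apply dot_sub_l. Qed.
Lemma dot_scal_r d a x z : dot d z (vscal a x) = a * dot d z x.
Proof. rewrite !(dot_sym d z); apply dot_scal_l. Qed.
Lemma dot_pos d x : 0 <= dot d x x.
Proof. induction d; simpl; nra. Qed.
Lemma dot_veq_l d x y z : veq d x y -> dot d x z = dot d y z.
Proof. intro H; induction d; simpl; auto. rewrite IHd, H; auto.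
  intros i Hi; apply H; lia. Qed.
Lemma dot_zero d x : dot d x x = 0 -> forall i, (i < d)%nat -> x i = 0.
Proof. induction d; intros H i Hi; [lia|]. simpl in H.
  pose proof (dot_pos d x). assert (x d * x d = 0) by nra.
  assert (dot d x x = 0) by nra.
  destruct (Nat.eq_dec i d); [subst; nra|]. apply IHd; auto; lia. Qed.
Lemma dot_zero_r d x y : dot d x x = 0 -> dot d x y = 0.
Proof. intro H. pose proof (dot_zero d x H). clear H. induction d; simpl; auto.
  rewrite IHd, H0; [ring|lia|]. intros; apply H0; lia. Qed.

Lemma CS2 d x y : (dot d x y)^2 <= dot d x x * dot d y y.
Proof.
  pose proof (dot_pos d x); pose proof (dot_pos d y).
  destruct (Req_dec (dot d y y) 0) as [E|E].
  - rewrite (dot_sym d x y), dot_zero_r; auto. nra.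
  - set (t := dot d x y / dot d y y).
    pose proof (dot_pos d (vsub x (vscal t y))).
    rewrite dot_sub_l, !dot_sub_r, !dot_scal_l, !dot_scal_r in H1.
    rewrite (dot_sym d y x) in H1.
    assert (dot d y y > 0) by lra.
    assert (E2: dot d y y * (dot d x x - t * dot d x y - (t * dot d x y - t * (t * dot d y y)))
      = dot d x x * dot d y y - (dot d x y)^2) by (unfold t; field; lra).
    assert (0 <= dot d y y * (dot d x x - t * dot d x y - (t * dot d x y - t * (t * dot d y y)))).
    { apply Rmult_le_pos; lra. }
    lra.
Qed.

Lemma norm_nonneg d x : 0 <= norm d x.
Proof. apply sqrt_pos. Qed.
Lemma norm_sq d x : norm d x * norm d x = dot d x x.
Proof. apply sqrt_sqrt, dot_pos. Qed.

Lemma sq_le a b : 0 <= b -> a * a <= b * b -> a <= b.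
Proof. intros. nra. Qed.

Lemma CS d x y : Rabs (dot d x y) <= norm d x * norm d y.
Proof.
  pose proof (norm_nonneg d x); pose proof (norm_nonneg d y).
  apply sq_le. nra.
  assert (Rabs (dot d x y) * Rabs (dot d x y) = (dot d x y)^2).
  { rewrite <- Rabs_mult. rewrite Rabs_pos_eq; nra. }
  rewrite H1.
  replace (norm d x * norm d y * (norm d x * norm d y)) with
    ((norm d x * norm d x) * (norm d y * norm d y)) by ring.
  rewrite !norm_sq. apply CS2.
Qed.
Lemma CS' d x y : dot d x y <= norm d x * norm d y.
Proof. pose proof (CS d x y). pose proof (Rle_abs (dot d x y)). lra. Qed.
Lemma CS'' d x y : - (norm d x * norm d y) <= dot d x y.
Proof. pose proof (CS d x y). pose proof (Rle_abs (- dot d x y)). rewrite Rabs_Ropp in H0. lra. Qed.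

Lemma norm_triangle d x y : norm d (vadd x y) <= norm d x + norm d y.
Proof.
  pose proof (norm_nonneg d x); pose proof (norm_nonneg d y).
  apply sq_le. lra. rewrite norm_sq, dot_add_l, !dot_add_r.
  pose proof (CS' d x y). rewrite (dot_sym d y x).
  pose proof (norm_sq d x); pose proof (norm_sq d y). nra.
Qed.
Lemma norm_scal d a x : norm d (vscal a x) = Rabs a * norm d x.
Proof. unfold norm. rewrite dot_scal_l, dot_scal_r, <- Rmult_assoc.
  rewrite sqrt_mult_alt. f_equal. rewrite <- sqrt_Rsqr_abs. reflexivity.
  pose proof (Rle_0_sqr a). unfold Rsqr in H. lra. Qed.
Lemma norm_sub_sym d x y : norm d (vsub x y) = norm d (vsub y x).
Proof. replace (vsub x y) with (vscal (-1) (vsub y x)) by pteq.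
  rewrite norm_scal. replace (Rabs (-1)) with 1. ring. rewrite Rabs_left; lra. Qed.
Lemma coord_le d x i : (i < d)%nat -> Rabs (x i) <= norm d x.
Proof. intro Hi. apply sq_le. apply norm_nonneg. rewrite norm_sq.
  rewrite <- Rabs_mult, Rabs_pos_eq by nra.
  induction d; [lia|]. simpl. pose proof (dot_pos d x).
  destruct (Nat.eq_dec i d). subst; nra. assert (i < d)%nat by lia. specialize (IHd H0). nra. Qed.
Lemma norm_pos_ne d x : norm d x > 0 -> dot d x x > 0.
Proof. intro H. rewrite <- norm_sq. nra. Qed.
Lemma in_Rd_add d x y : in_Rd d x -> in_Rd d y -> in_Rd d (vadd x y).
Proof. unfold in_Rd, vadd; intros Hx Hy i Hi; rewrite Hx, Hy; auto; ring. Qed.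
Lemma in_Rd_sub d x y : in_Rd d x -> in_Rd d y -> in_Rd d (vsub x y).
Proof. unfold in_Rd, vsub; intros Hx Hy i Hi; rewrite Hx, Hy; auto; ring. Qed.
Lemma in_Rd_scal d a x : in_Rd d x -> in_Rd d (vscal a x).
Proof. unfold in_Rd, vscal; intros Hx i Hi; rewrite Hx; auto; ring. Qed.
Lemma veq_in_eq d x y : in_Rd d x -> in_Rd d y -> veq d x y -> x = y.
Proof. intros Hx Hy H. apply functional_extensionality; intro i.
  destruct (Compare_dec.le_lt_dec d i). rewrite Hx, Hy; auto. apply H; auto. Qed.
Lemma norm_sub_tri d x y z : norm d (vsub x z) <= norm d (vsub x y) + norm d (vsub y z).
Proof. replace (vsub x z) with (vadd (vsub x y) (vsub y z)) by pteq. apply norm_triangle. Qed.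

Lemma ge_eps a : (forall eps, eps > 0 -> a > - eps) -> a >= 0.
Proof. intro H. destruct (Rlt_or_le a 0); [|lra]. specialize (H (-a)). lra. Qed.
Lemma le_eps a b : (forall eps, eps > 0 -> a < b + eps) -> a <= b.
Proof. intro H. destruct (Rle_or_lt a b); [lra|]. specialize (H (a - b)). lra. Qed.
Lemma sq_lt a b : 0 <= b -> a * a < b * b -> a < b.
Proof. intros. destruct (Rlt_or_le a b); auto. nra. Qed.



Lemma open_seg d Om X y s : (forall x, Om x -> in_Rd d x) -> open_Rd d Om -> convex_set d Om ->
  closure d Om X -> Om y -> 0 < s <= 1 -> Om (vadd X (vscal s (vsub y X))).
Proof.
  intros Hin Hop Hcv HX Hy Hs.
  destruct (Hop y Hy) as [Hiy [r [Hr Hball]]].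
  destruct HX as [HiX HX].
  destruct (HX (r * s)) as [x' [Hx' Hd]]. nra.
  set (y' := vadd y (vscal ((1 - s)/s) (vsub X x'))).
  assert (Hy' : Om y').
  { apply Hball. unfold y'. apply in_Rd_add; auto. apply in_Rd_scal, in_Rd_sub; auto.
    replace (vsub y' y) with (vscal ((1 - s)/s) (vsub X x')) by (unfold y'; pteq).
    rewrite norm_scal, norm_sub_sym. rewrite Rabs_pos_eq.
    2:{ apply Rmult_le_pos; [lra| left; apply Rinv_0_lt_compat; lra]. }
    apply Rle_lt_trans with ((1 - s) / s * (r * s)).
    apply Rmult_le_compat_l; [apply Rmult_le_pos; [lra| left; apply Rinv_0_lt_compat; lra]|lra].
    replace ((1 - s) / s * (r * s)) with ((1 - s) * r) by (field; lra). nra. }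
  pose proof (Hcv y' x' s Hy' Hx' ltac:(lra)).
  replace (vadd X (vscal s (vsub y X))) with (vadd (vscal s y') (vscal (1 - s) x')); auto.
  apply functional_extensionality; intro i; unfold y', vsub, vadd, vscal; field; lra.
Qed.

Lemma bdry_notin d Om X : open_Rd d Om -> bdry d Om X -> ~ Om X.
Proof.
  intros Hop [_ [_ HC]] HX. destruct (Hop X HX) as [_ [r [Hr Hb]]].
  destruct (HC r Hr) as [z [[Hz Hnz] Hd]]. apply Hnz, Hb; auto.
Qed.

Lemma nu_unit d Om nu X : C1_domain_inner_normal d Om nu -> bdry d Om X ->
  norm d (nu X) = 1 /\ in_Rd d (nu X).
Proof.
  intros HC HX. destruct (HC X HX) as [r [rho [G [Hr [HG [Hiff [HGn [Hin Hveq]]]]]]]].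
  split; auto. unfold norm. rewrite (dot_veq_l _ _ _ _ Hveq). idtac.
  rewrite dot_sym, (dot_veq_l _ _ _ _ Hveq), dot_scal_l, dot_scal_r.
  rewrite <- norm_sq. replace (- / norm d (G X) * (- / norm d (G X) * (norm d (G X) * norm d (G X)))) with 1.
  apply sqrt_1. field; auto.
Qed.

Lemma C1_deriv d Om nu X : C1_domain_inner_normal d Om nu -> bdry d Om X ->
  exists r rho G, r > 0 /\ in_Rd d G /\
   (forall eps, eps > 0 -> exists delta, delta > 0 /\
    forall y, in_Rd d y -> norm d (vsub y X) < delta ->
      Rabs (rho y - rho X - dot d G (vsub y X)) <= eps * norm d (vsub y X)) /\
   (forall x, in_Rd d x -> norm d (vsub x X) < r -> (Om x <-> rho x < 0)) /\
   norm d G > 0 /\ (forall w, dot d (nu X) w = - / norm d G * dot d G w).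
Proof.
  intros HC HX. destruct (HC X HX) as [r [rho [G [Hr [HG [Hiff [HGn [Hin Hveq]]]]]]]].
  assert (HXi : in_Rd d X) by (destruct HX as [[? _] _]; auto).
  assert (norm d (vsub X X) < r).
  { replace (vsub X X) with (vscal 0 X) by pteq. rewrite norm_scal, Rabs_R0. lra. }
  destruct (HG X HXi H) as [[HGi Hd] _].
  exists r, rho, (G X). split; [lra|]. split; auto. split; auto. split; auto.
  split. pose proof (norm_nonneg d (G X)). lra.
  intro w. rewrite (dot_veq_l _ _ _ _ Hveq), dot_scal_l. auto.
Qed.

Lemma norm_zero_vec d X : norm d (vsub X X) = 0.
Proof. replace (vsub X X) with (vscal 0 X) by pteq. rewrite norm_scal, Rabs_R0. lra. Qed.

Lemma nu_ineq d Om nu X y : (forall x, Om x -> in_Rd d x) -> open_Rd d Om -> convex_set d Om ->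
  C1_domain_inner_normal d Om nu -> bdry d Om X -> Om y -> dot d (nu X) (vsub y X) >= 0.
Proof.
  intros Hin Hop Hcv HC HX Hy.
  destruct (Rlt_or_le (dot d (nu X) (vsub y X)) 0) as [Hc|]; [|lra]. exfalso.
  destruct (C1_deriv d Om nu X HC HX) as [r [rho [G [Hr [HGi [Hd [Hiff [HGn Hnu]]]]]]]].
  set (w := vsub y X) in *.
  assert (HXi : in_Rd d X) by (destruct HX as [[? _] _]; auto).
  assert (Hwi : in_Rd d w) by (apply in_Rd_sub; auto).
  assert (HGw : dot d G w > 0).
  { rewrite Hnu in Hc. assert (/ norm d G > 0) by (apply Rinv_0_lt_compat; lra). nra. }
  pose proof (norm_nonneg d w) as Hw0.
  set (eps := dot d G w / (2 * (norm d w + 1))).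
  assert (Heps : eps > 0) by (unfold eps; apply Rdiv_lt_0_compat; lra).
  destruct (Hd eps Heps) as [delta [Hdel Hd']].
  set (s := Rmin 1 (Rmin (delta / (2 * (norm d w + 1))) (r / (2 * (norm d w + 1))))).
  assert (Hs1 : 0 < s <= 1).
  { unfold s. split. apply Rmin_pos; [lra| apply Rmin_pos; apply Rdiv_lt_0_compat; lra]. apply Rmin_l. }
  assert (Hs2 : s * norm d w < delta /\ s * norm d w < r).
  { assert (s <= delta / (2 * (norm d w + 1))) by (unfold s; eapply Rle_trans; [apply Rmin_r| apply Rmin_l]).
    assert (s <= r / (2 * (norm d w + 1))) by (unfold s; eapply Rle_trans; [apply Rmin_r| apply Rmin_r]).
    assert (delta / (2 * (norm d w + 1)) * (2 * (norm d w + 1)) = delta) by (field; lra).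
    assert (r / (2 * (norm d w + 1)) * (2 * (norm d w + 1)) = r) by (field; lra).
    split; nra. }
  set (p := vadd X (vscal s w)).
  assert (Hp : Om p) by (apply (open_seg d); auto; destruct HX; auto).
  assert (Hpv : vsub p X = vscal s w) by (unfold p; pteq).
  assert (Hpn : norm d (vsub p X) = s * norm d w) by (rewrite Hpv, norm_scal, Rabs_pos_eq; lra).
  assert (Hpi : in_Rd d p) by auto.
  assert (rho p < 0) by (apply (Hiff p Hpi); [rewrite Hpn; lra| auto]).
  assert (rho X >= 0).
  { destruct (Rlt_or_le (rho X) 0); [|lra]. exfalso. apply (bdry_notin d Om X Hop HX).
    apply Hiff; auto. rewrite norm_zero_vec; lra. }
  specialize (Hd' p Hpi ltac:(lra)). rewrite Hpn, Hpv, dot_scal_r in Hd'.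
  pose proof (Rle_abs (- (rho p - rho X - s * dot d G w))). rewrite Rabs_Ropp in H1.
  assert (eps * (s * norm d w) <= s * dot d G w / 2).
  { unfold eps. assert (dot d G w / (2 * (norm d w + 1)) * (2 * (norm d w + 1)) = dot d G w) by (field; lra).
    nra. }
  nra.
Qed.

Lemma nu_ineq_cl d Om nu X z : (forall x, Om x -> in_Rd d x) -> open_Rd d Om -> convex_set d Om ->
  C1_domain_inner_normal d Om nu -> bdry d Om X -> closure d Om z -> dot d (nu X) (vsub z X) >= 0.
Proof.
  intros Hin Hop Hcv HC HX [Hz Hcl]. apply ge_eps; intros eps Heps.
  destruct (Hcl eps Heps) as [y [Hy Hd]].
  pose proof (nu_ineq d Om nu X y Hin Hop Hcv HC HX Hy).
  replace (vsub z X) with (vadd (vsub y X) (vsub z y)) by pteq.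
  rewrite dot_add_r. pose proof (CS'' d (nu X) (vsub z y)).
  destruct (nu_unit d Om nu X HC HX) as [Hn _]. rewrite Hn, norm_sub_sym in H0. lra.
Qed.


Lemma coord_sq d x i : (i < d)%nat -> (x i)^2 <= dot d x x.
Proof. intro Hi. induction d; [lia|]. simpl. pose proof (dot_pos d x).
  destruct (Nat.eq_dec i d). subst; nra. assert (i < d)%nat by lia. specialize (IHd H0). nra. Qed.

Lemma dot_bound d v c : (forall i, (i < d)%nat -> (v i)^2 <= c) -> dot d v v <= INR d * c.
Proof. induction d; intro H. simpl; lra. simpl dot. rewrite S_INR.
  assert (dot d v v <= INR d * c) by (apply IHd; intros; apply H; lia).
  specialize (H d ltac:(lia)). nra. Qed.

Lemma invS_pos n : / INR (S n) > 0.
Proof. apply Rinv_0_lt_compat, lt_0_INR; lia. Qed.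

Lemma small_inv c : c > 0 -> exists n, / INR (S n) < c.
Proof. intro Hc. destruct (archimed (/ c)) as [H1 _].
  destruct (Z.le_gt_cases (up (/ c)) 0) as [Hz|Hz].
  - exists 0%nat. simpl. apply IZR_le in Hz. pose proof (Rinv_0_lt_compat c Hc). lra.
  - exists (Z.to_nat (up (/ c))). rewrite S_INR, INR_IZR_INZ, Z2Nat.id by lia.
    assert (/ c > 0) by (apply Rinv_0_lt_compat; lra).
    assert (/ (IZR (up (/ c)) + 1) < / / c) by (apply Rinv_lt_contravar; nra).
    rewrite Rinv_inv in H0. exact H0.
Qed.

Lemma para d a b : dot d (vsub b a) (vsub b a) =
  2 * dot d a a + 2 * dot d b b - 4 * dot d (vscal (1/2) (vadd a b)) (vscal (1/2) (vadd a b)).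
Proof. rewrite !dot_sub_l, !dot_sub_r, !dot_scal_l, !dot_scal_r, !dot_add_l, !dot_add_r.
  rewrite (dot_sym d a b). field. Qed.

Lemma lim_le (u : nat -> R) l a s : Un_cv u l -> (forall m, Rabs (a - u m) <= s \/ False) -> Rabs (a - l) <= s.
Abort.

Lemma lim_le (u : nat -> R) l a s N : Un_cv u l -> (forall m, (m >= N)%nat -> Rabs (a - u m) <= s) -> Rabs (a - l) <= s.
Proof.
  intros Hu H. destruct (Rle_or_lt (Rabs (a - l)) s) as [|Hlt]; auto. exfalso.
  destruct (Hu (Rabs (a - l) - s)) as [M HM]. lra.
  specialize (HM (max N M) ltac:(lia)). specialize (H (max N M) ltac:(lia)).
  unfold R_dist in HM. pose proof (Rabs_triang (a - u (max N M)) (u (max N M) - l)).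
  replace (a - u (max N M) + (u (max N M) - l)) with (a - l) in H0 by ring. lra.
Qed.

Lemma nearest d Om x : (forall y, Om y -> in_Rd d y) -> convex_set d Om -> (exists y, Om y) ->
  in_Rd d x -> exists X, closure d Om X /\ forall z, Om z -> norm d (vsub x X) <= norm d (vsub x z).
Proof.
  intros Hin Hcv [y0 Hy0] Hx.
  set (E := fun v => exists z, Om z /\ v = - dot d (vsub x z) (vsub x z)).
  assert (HE : bound E). { exists 0. intros v [z [_ ->]]. pose proof (dot_pos d (vsub x z)). lra. }
  assert (HE2 : exists v, E v) by (exists (- dot d (vsub x y0) (vsub x y0)); exists y0; auto).
  destruct (completeness E HE HE2) as [L [HL1 HL2]].
  set (D := fun z => dot d (vsub x z) (vsub x z)).
  assert (Hlow : forall z, Om z -> D z >= - L).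
  { intros z Hz. assert (E (- D z)) by (exists z; auto). specialize (HL1 _ H). unfold D in *; lra. }
  assert (Happ : forall n : nat, exists z, Om z /\ D z < - L + / INR (S n)).
  { intro n. apply NNPP; intro Hn.
    assert (is_upper_bound E (L - / INR (S n))).
    { intros v [z [Hz ->]]. destruct (Rle_or_lt (- dot d (vsub x z) (vsub x z)) (L - / INR (S n))); auto.
      exfalso; apply Hn; exists z; split; auto; unfold D; lra. }
    specialize (HL2 _ H). pose proof (invS_pos n). lra. }
  set (z := fun n => proj1_sig (constructive_indefinite_description _ (Happ n))).
  assert (Hz : forall n, Om (z n) /\ D (z n) < - L + / INR (S n)).
  { intro n. unfold z. destruct (constructive_indefinite_description _ (Happ n)); auto. }
  assert (Hcau : forall n m, (n <= m)%nat -> dot d (vsub (z n) (z m)) (vsub (z n) (z m)) <= 4 * / INR (S n)).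
  { intros n m Hnm. replace (vsub (z n) (z m)) with (vsub (vsub x (z m)) (vsub x (z n))) by pteq.
    rewrite para.
    set (mid := vadd (vscal (1/2) (z n)) (vscal (1 - 1/2) (z m))).
    assert (Om mid) by (apply Hcv; [apply Hz| apply Hz| lra]).
    replace (vscal (1/2) (vadd (vsub x (z n)) (vsub x (z m)))) with (vsub x mid)
      by (unfold mid; apply functional_extensionality; intro; unfold vsub, vadd, vscal; field).
    pose proof (Hlow mid H). destruct (Hz n) as [_ H1]. destruct (Hz m) as [_ H2]. unfold D in *.
    assert (/ INR (S m) <= / INR (S n)).
    { apply Rinv_le_contravar. apply lt_0_INR; lia. apply le_INR; lia. }
    lra. }
  assert (Hcc : forall i, Cauchy_crit (fun n => z n i)).
  { intros i eps Heps. destruct (small_inv (eps * eps / 4)) as [N HN]. nra.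
    exists N. intros n m Hn Hm. unfold R_dist.
    assert (forall n m, (N <= n <= m)%nat -> Rabs (z n i - z m i) < eps).
    { intros a b Hab. destruct (lt_dec i d) as [Hi|Hi].
      - pose proof (coord_sq d (vsub (z a) (z b)) i Hi). specialize (Hcau a b ltac:(lia)).
        unfold vsub in H, Hcau. assert (/ INR (S a) <= / INR (S N)).
        { apply Rinv_le_contravar. apply lt_0_INR; lia. apply le_INR; lia. }
        rewrite <- (Rabs_pos_eq eps) by lra. apply Rsqr_lt_abs_0. unfold Rsqr. simpl in H. nra.
      - rewrite (Hin _ (proj1 (Hz a))), (Hin _ (proj1 (Hz b))) by lia.
        rewrite Rminus_0_r, Rabs_R0; auto. }
    destruct (Nat.le_ge_cases n m). apply H; lia. rewrite <- Rabs_Ropp.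
    replace (- (z n i - z m i)) with (z m i - z n i) by ring. apply H; lia. }
  set (X := fun i => proj1_sig (R_complete _ (Hcc i))).
  assert (HXl : forall i, Un_cv (fun n => z n i) (X i)).
  { intro i. unfold X. destruct (R_complete _ (Hcc i)); auto. }
  assert (HXb : forall n i, (i < d)%nat -> Rabs (z n i - X i) <= sqrt (4 * / INR (S n))).
  { intros n i Hi. apply (lim_le _ _ _ _ n (HXl i)). intros m Hm.
    pose proof (coord_sq d (vsub (z n) (z m)) i Hi). specialize (Hcau n m Hm). unfold vsub in H, Hcau.
    rewrite <- sqrt_Rsqr_abs. apply sqrt_le_1_alt. unfold Rsqr; simpl in H; lra. }
  assert (HXi : in_Rd d X).
  { intros i Hi. apply (UL_sequence (fun n => z n i)); auto.
    intros eps Heps. exists 0%nat. intros n _. unfold R_dist. rewrite (Hin _ (proj1 (Hz n))) by lia.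
    rewrite Rminus_0_r, Rabs_R0; auto. }
  assert (Hzn : forall n, dot d (vsub (z n) X) (vsub (z n) X) <= INR d * (4 * / INR (S n))).
  { intro n. apply dot_bound. intros i Hi. specialize (HXb n i Hi).
    pose proof (Rabs_pos (z n i - X i)).
    assert (0 <= 4 * / INR (S n)) by (pose proof (invS_pos n); lra).
    pose proof (sqrt_sqrt _ H0). unfold vsub.
    replace ((z n i - X i) ^ 2) with (Rabs (z n i - X i) * Rabs (z n i - X i)).
    pose proof (sqrt_pos (4 * / INR (S n))). nra. rewrite <- Rabs_mult, Rabs_pos_eq. ring. pose proof (Rle_0_sqr (z n i - X i)); unfold Rsqr in *; lra. }
  exists X. split.
  - split; auto. intros eps Heps.
    destruct (small_inv (eps * eps / (4 * (INR d + 1)))) as [n Hn].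
    { apply Rdiv_lt_0_compat. nra. pose proof (pos_INR d); lra. }
    exists (z n). split. apply Hz. apply sq_lt. lra. rewrite norm_sq.
    specialize (Hzn n). pose proof (pos_INR d).
    assert (/ INR (S n) * (4 * (INR d + 1)) < eps * eps).
    { apply Rmult_lt_reg_r with (/ (4 * (INR d + 1))). apply Rinv_0_lt_compat; lra.
      replace (/ INR (S n) * (4 * (INR d + 1)) * / (4 * (INR d + 1))) with (/ INR (S n)) by (pose proof (lt_0_INR (S n) ltac:(lia)); field; lra).
      exact Hn. }
    pose proof (invS_pos n). nra.
  - intros w Hw. apply le_eps; intros eps Heps.
    destruct (small_inv (eps * eps / (16 * (INR d + 1)))) as [n Hn].
    { apply Rdiv_lt_0_compat. nra. pose proof (pos_INR d); lra. }
    pose proof (pos_INR d).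
    assert (Hn' : / INR (S n) * (16 * (INR d + 1)) < eps * eps).
    { apply Rmult_lt_reg_r with (/ (16 * (INR d + 1))). apply Rinv_0_lt_compat; lra.
      replace (/ INR (S n) * (16 * (INR d + 1)) * / (16 * (INR d + 1))) with (/ INR (S n)) by (pose proof (lt_0_INR (S n) ltac:(lia)); field; lra).
      exact Hn. }
    pose proof (invS_pos n).
    pose proof (norm_sub_tri d x (z n) X).
    assert (norm d (vsub (z n) X) < eps / 2).
    { apply Rnot_le_lt; intro Hc. assert (Hq : eps/2 * (eps/2) <= norm d (vsub (z n) X) * norm d (vsub (z n) X)) by nra.
      rewrite norm_sq in Hq. specialize (Hzn n). nra. }
    assert (norm d (vsub x (z n)) < norm d (vsub x w) + eps / 2).
    { apply Rnot_le_lt; intro Hc. pose proof (norm_nonneg d (vsub x w)).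
      assert (Hq : (norm d (vsub x w) + eps / 2) * (norm d (vsub x w) + eps / 2) <=
         norm d (vsub x (z n)) * norm d (vsub x (z n))) by nra.
      rewrite norm_sq in Hq. pose proof (norm_sq d (vsub x w)).
      destruct (Hz n) as [_ H7]. pose proof (Hlow w Hw). unfold D in *. nra. }
    lra.
Qed.


Lemma small_s a b : a > 0 -> b >= 0 -> exists s, 0 < s <= 1 /\ s * b < a.
Proof. intros Ha Hb. exists (Rmin 1 (a / (2 * (b + 1)))). split.
  split. apply Rmin_pos; [lra| apply Rdiv_lt_0_compat; lra]. apply Rmin_l.
  assert (Rmin 1 (a / (2 * (b + 1))) <= a / (2 * (b + 1))) by apply Rmin_r.
  assert (a / (2 * (b + 1)) * (2 * (b + 1)) = a) by (field; lra).
  assert (0 < Rmin 1 (a / (2 * (b + 1)))) by (apply Rmin_pos; [lra| apply Rdiv_lt_0_compat; lra]).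
  nra. Qed.

Lemma nearest_props d Om nu x : (forall y, Om y -> in_Rd d y) -> open_Rd d Om -> convex_set d Om ->
  (exists y, Om y) -> C1_domain_inner_normal d Om nu -> in_Rd d x -> ~ closure d Om x ->
  exists X, bdry d Om X /\ (forall z, Om z -> norm d (vsub x X) <= norm d (vsub x z)) /\
    norm d (vsub x X) > 0 /\ (forall z, Om z -> dot d (vsub x X) (vsub z X) <= 0) /\
    (forall w, dot d (nu X) w = - / norm d (vsub x X) * dot d (vsub x X) w).
Proof.
  intros Hin Hop Hcv Hne HC Hx Hncl.
  destruct (nearest d Om x Hin Hcv Hne Hx) as [X [HXc HXm]].
  assert (HXi : in_Rd d X) by (destruct HXc; auto).
  set (a := vsub x X).
  assert (Hai : in_Rd d a) by (apply in_Rd_sub; auto).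
  assert (Hdel : norm d a > 0).
  { destruct (Rlt_or_le 0 (norm d a)); auto. exfalso. apply Hncl. split; auto.
    intros eps Heps. destruct HXc as [_ HXc]. destruct (HXc eps Heps) as [y [Hy Hd]].
    exists y; split; auto. pose proof (norm_sub_tri d y X x). pose proof (norm_nonneg d a).
    rewrite (norm_sub_sym d X x) in H0. unfold a in *. lra. }
  set (del := norm d a) in *.
  assert (Hvar : forall z, Om z -> dot d a (vsub z X) <= 0).
  { intros z Hz. set (w := vsub z X).
    destruct (Rle_or_lt (dot d a w) 0) as [|Hp]; auto. exfalso.
    pose proof (dot_pos d w).
    set (s := Rmin 1 (dot d a w / (dot d w w + 1))).
    assert (Hs : 0 < s <= 1).
    { split. apply Rmin_pos; [lra| apply Rdiv_lt_0_compat; lra]. apply Rmin_l. }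
    assert (Hs2 : s * (dot d w w + 1) <= dot d a w).
    { assert (s <= dot d a w / (dot d w w + 1)) by apply Rmin_r.
      assert (dot d a w / (dot d w w + 1) * (dot d w w + 1) = dot d a w) by (field; lra). nra. }
    pose proof (open_seg d Om X z s Hin Hop Hcv HXc Hz Hs) as Hp2.
    specialize (HXm _ Hp2).
    replace (vsub x (vadd X (vscal s (vsub z X)))) with (vsub a (vscal s w)) in HXm by (unfold a, w; pteq).
    assert (Hq : norm d a * norm d a <= norm d (vsub a (vscal s w)) * norm d (vsub a (vscal s w))).
    { fold a in HXm. pose proof (norm_nonneg d a). pose proof (norm_nonneg d (vsub a (vscal s w))). apply Rmult_le_compat; lra. }
    rewrite !norm_sq, dot_sub_l, !dot_sub_r, !dot_scal_l, !dot_scal_r, (dot_sym d w a) in Hq.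
    nra. }
  assert (HXb : bdry d Om X).
  { split; auto. split; auto. intros eps Heps.
    destruct (small_s eps del Heps ltac:(lra)) as [s [Hs Hsa]].
    set (s' := s / 2).
    exists (vadd X (vscal s' a)). split.
    - split. apply in_Rd_add; auto. apply in_Rd_scal; auto.
      intro Hy. specialize (HXm _ Hy).
      replace (vsub x (vadd X (vscal s' a))) with (vscal (1 - s') a) in HXm by (unfold a; pteq).
      rewrite norm_scal, Rabs_pos_eq in HXm by (unfold s'; lra). unfold s' in HXm. fold a del in HXm. nra.
    - replace (vsub (vadd X (vscal s' a)) X) with (vscal s' a) by pteq.
      rewrite norm_scal, Rabs_pos_eq by (unfold s'; lra). unfold s'. fold del. nra. }
  exists X. split; auto. split; auto. split; auto. split; auto.
  destruct (C1_deriv d Om nu X HC HXb) as [r [rho [G [Hr [HGi [Hd [Hiff [HGn Hnu]]]]]]]].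
  assert (HrX : rho X <= 0).
  { destruct (Rle_or_lt (rho X) 0) as [|Hpos]; auto. exfalso.
    destruct (Hd 1 ltac:(lra)) as [d1 [Hd1 Hd1']].
    set (e := Rmin d1 (Rmin r (rho X / (norm d G + 1)))).
    assert (He : e > 0). { unfold e. apply Rmin_pos; [lra| apply Rmin_pos; [lra| apply Rdiv_lt_0_compat; pose proof (norm_nonneg d G); lra]]. }
    destruct HXc as [_ HXc]. destruct (HXc e He) as [y [Hy Hyd]].
    assert (Hyi : in_Rd d y) by auto.
    assert (e <= d1) by apply Rmin_l.
    assert (e <= r) by (unfold e; eapply Rle_trans; [apply Rmin_r| apply Rmin_l]).
    assert (e <= rho X / (norm d G + 1)) by (unfold e; eapply Rle_trans; [apply Rmin_r| apply Rmin_r]).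
    assert (rho y < 0) by (apply (Hiff y Hyi); [lra| auto]).
    specialize (Hd1' y Hyi ltac:(lra)).
    pose proof (CS d G (vsub y X)).
    pose proof (Rle_abs (- (rho y - rho X - dot d G (vsub y X)))). rewrite Rabs_Ropp in H4.
    pose proof (Rle_abs (- dot d G (vsub y X))). rewrite Rabs_Ropp in H5.
    pose proof (norm_nonneg d G). pose proof (norm_nonneg d (vsub y X)).
    assert (rho X / (norm d G + 1) * (norm d G + 1) = rho X) by (field; lra).
    assert (e * (norm d G + 1) <= rho X) by nra.
    assert (norm d G * norm d (vsub y X) <= norm d G * e) by (apply Rmult_le_compat_l; lra).
    lra. }
  assert (Hdir : forall v, in_Rd d v -> dot d G v < 0 -> dot d a v <= 0).
  { intros v Hv HGv. pose proof (norm_nonneg d v).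
    set (eps := - dot d G v / (2 * (norm d v + 1))).
    assert (Heps : eps > 0) by (unfold eps; apply Rdiv_lt_0_compat; lra).
    destruct (Hd eps Heps) as [d1 [Hd1 Hd1']].
    destruct (small_s (Rmin d1 r) (norm d v) ltac:(apply Rmin_pos; lra) ltac:(lra)) as [s [Hs Hsv]].
    assert (Rmin d1 r <= d1) by apply Rmin_l. assert (Rmin d1 r <= r) by apply Rmin_r.
    set (p := vadd X (vscal s v)).
    assert (Hpi : in_Rd d p) by (apply in_Rd_add; auto; apply in_Rd_scal; auto).
    assert (Hpv : vsub p X = vscal s v) by (unfold p; pteq).
    assert (Hpn : norm d (vsub p X) = s * norm d v) by (rewrite Hpv, norm_scal, Rabs_pos_eq; lra).
    specialize (Hd1' p Hpi ltac:(lra)). rewrite Hpn, Hpv, dot_scal_r in Hd1'.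
    pose proof (Rle_abs (rho p - rho X - s * dot d G v)).
    assert (eps * (s * norm d v) <= s * (- dot d G v) / 2).
    { unfold eps. assert (- dot d G v / (2 * (norm d v + 1)) * (2 * (norm d v + 1)) = - dot d G v) by (field; lra).
      nra. }
    assert (Hp : Om p). { apply (Hiff p Hpi). lra. nra. }
    specialize (Hvar p Hp). rewrite Hpv, dot_scal_r in Hvar. nra. }
  set (g := vscal (/ norm d G) G). set (u := vscal (/ del) a).
  assert (Hgu : dot d g u >= 1).
  { destruct (Rlt_or_le (dot d g u) 1) as [Hlt|]; [|lra]. exfalso.
    assert (Hgg : dot d g g = 1).
    { unfold g. rewrite dot_scal_l, dot_scal_r, <- norm_sq. field. lra. }
    assert (Huu : dot d u u = 1).
    { unfold u. rewrite dot_scal_l, dot_scal_r, <- norm_sq. fold del. field. lra. }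
    assert (Hvi : in_Rd d (vsub u g)) by (apply in_Rd_sub; apply in_Rd_scal; auto).
    specialize (Hdir (vsub u g) Hvi).
    assert (dot d G (vsub u g) < 0).
    { replace G with (vscal (norm d G) g) by (unfold g; apply functional_extensionality; intro; unfold vscal; field; lra).
      rewrite dot_scal_l, dot_sub_r, Hgg, (dot_sym d g u) in *. nra. }
    specialize (Hdir H).
    replace a with (vscal del u) in Hdir by (unfold u; apply functional_extensionality; intro; unfold vscal; field; lra).
    rewrite dot_scal_l, dot_sub_r, Huu, (dot_sym d u g) in Hdir. nra. }
  assert (Hgg : dot d g g = 1).
  { unfold g. rewrite dot_scal_l, dot_scal_r, <- norm_sq. field. lra. }
  assert (Huu : dot d u u = 1).
  { unfold u. rewrite dot_scal_l, dot_scal_r, <- norm_sq. fold del. field. lra. }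
  assert (Hz : dot d (vsub u g) (vsub u g) = 0).
  { pose proof (CS' d g u). unfold norm in H. rewrite Hgg, Huu, sqrt_1 in H.
    rewrite dot_sub_l, !dot_sub_r, Hgg, Huu, (dot_sym d u g). lra. }
  intro w. rewrite Hnu.
  pose proof (dot_zero_r d (vsub u g) w Hz). rewrite dot_sub_l in H.
  unfold u, g in H. rewrite !dot_scal_l in H. fold a. fold del.
  assert (/ norm d G * dot d G w = / del * dot d a w) by lra.
  replace (- / norm d G * dot d G w) with (- (/ norm d G * dot d G w)) by ring. rewrite H0. ring.
Qed.


Definition Hinf_def d Om h0 lam0 nu hs := forall x, in_Rd d x ->
     is_inf (fun v => exists X, bdry d Om X /\ v = h0 + lam0 * dot d (nu X) (vsub x X)) (hs x).

Lemma hs_upper d Om h0 lam0 nu hs x X : Hinf_def d Om h0 lam0 nu hs -> in_Rd d x -> bdry d Om X ->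
  hs x <= h0 + lam0 * dot d (nu X) (vsub x X).
Proof. intros H Hx HX. apply (proj1 (H x Hx)). exists X; auto. Qed.

Lemma hs_lower d Om h0 lam0 nu hs x z : (forall y, Om y -> in_Rd d y) -> open_Rd d Om -> convex_set d Om ->
  C1_domain_inner_normal d Om nu -> lam0 > 0 ->
  Hinf_def d Om h0 lam0 nu hs -> in_Rd d x -> closure d Om z ->
  hs x >= h0 - lam0 * norm d (vsub x z).
Proof.
  intros Hin Hop Hcv HC Hl H Hx Hz. apply Rle_ge, (proj2 (H x Hx)).
  intros v [X [HX ->]].
  replace (vsub x X) with (vadd (vsub x z) (vsub z X)) by pteq.
  rewrite dot_add_r. pose proof (nu_ineq_cl d Om nu X z Hin Hop Hcv HC HX Hz).
  pose proof (CS'' d (nu X) (vsub x z)). destruct (nu_unit d Om nu X HC HX) as [Hn _].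
  rewrite Hn in H1. nra.
Qed.

Lemma not_closure_sep d Om x : in_Rd d x -> ~ closure d Om x ->
  exists e, e > 0 /\ forall z, Om z -> norm d (vsub z x) >= e.
Proof. intros Hx Hn. apply NNPP; intro H. apply Hn. split; auto. intros eps Heps.
  apply NNPP; intro H2. apply H. exists eps. split; auto. intros z Hz.
  destruct (Rlt_or_le (norm d (vsub z x)) eps); [|lra]. exfalso; apply H2; exists z; auto. Qed.

Lemma dot_self0 d v w : dot d v (vsub w w) = 0.
Proof. replace (vsub w w) with (vscal 0 w) by pteq. rewrite dot_scal_r. ring. Qed.

Lemma closure_self d (Om : pt -> Prop) x : (forall y, Om y -> in_Rd d y) -> Om x -> closure d Om x.
Proof. intros Hin Hx. split; auto. intros eps Heps. exists x. split; auto. rewrite norm_zero_vec. lra. Qed.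


Lemma ext_props d Om h0 lam0 nu hs x : (forall y, Om y -> in_Rd d y) -> open_Rd d Om -> convex_set d Om ->
  (exists y, Om y) -> C1_domain_inner_normal d Om nu -> lam0 > 0 ->
  Hinf_def d Om h0 lam0 nu hs -> in_Rd d x ->
  ext Om h0 hs x <= hs x /\ ext Om h0 hs x <= h0.
Proof.
  intros Hin Hop Hcv Hne HC Hl H Hx. unfold ext.
  destruct (excluded_middle_informative (Om x)) as [Ho|Ho].
  - split; [|lra]. pose proof (hs_lower d Om h0 lam0 nu hs x x Hin Hop Hcv HC Hl H Hx (closure_self d Om x Hin Ho)).
    rewrite norm_zero_vec in H0. lra.
  - split; [lra|].
    destruct (classic (closure d Om x)) as [Hc|Hc].
    + assert (HX : bdry d Om x).
      { split; auto. split; auto. intros eps Heps. exists x. split; auto. rewrite norm_zero_vec. lra. }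
      pose proof (hs_upper d Om h0 lam0 nu hs x x H Hx HX). rewrite dot_self0 in H0. lra.
    + destruct (nearest_props d Om nu x Hin Hop Hcv Hne HC Hx Hc) as [X [HXb [_ [Hdel [_ Hnu]]]]].
      pose proof (hs_upper d Om h0 lam0 nu hs x X H Hx HXb). rewrite Hnu in H0.
      rewrite <- norm_sq in H0. assert (/ norm d (vsub x X) * (norm d (vsub x X) * norm d (vsub x X)) = norm d (vsub x X)) by (field; lra).
      nra.
Qed.

Lemma hs_exact d Om h0 lam0 nu hs x : (forall y, Om y -> in_Rd d y) -> open_Rd d Om -> convex_set d Om ->
  (exists y, Om y) -> C1_domain_inner_normal d Om nu -> lam0 > 0 ->
  Hinf_def d Om h0 lam0 nu hs -> in_Rd d x -> ~ closure d Om x ->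
  exists X, bdry d Om X /\ (forall z, Om z -> norm d (vsub x X) <= norm d (vsub x z)) /\
    norm d (vsub x X) > 0 /\ (forall z, Om z -> dot d (vsub x X) (vsub z X) <= 0) /\
    (forall w, dot d (nu X) w = - / norm d (vsub x X) * dot d (vsub x X) w) /\
    hs x = h0 - lam0 * norm d (vsub x X).
Proof.
  intros Hin Hop Hcv Hne HC Hl H Hx Hc.
  destruct (nearest_props d Om nu x Hin Hop Hcv Hne HC Hx Hc) as [X [HXb [Hm [Hdel [Hv Hnu]]]]].
  exists X. do 5 (split; [auto|]).
  pose proof (hs_upper d Om h0 lam0 nu hs x X H Hx HXb). rewrite Hnu in H0.
  rewrite <- norm_sq in H0. assert (/ norm d (vsub x X) * (norm d (vsub x X) * norm d (vsub x X)) = norm d (vsub x X)) by (field; lra).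
  pose proof (hs_lower d Om h0 lam0 nu hs x X Hin Hop Hcv HC Hl H Hx (proj1 HXb)). nra.
Qed.

Lemma concave_part d Om h0 lam0 nu hs : (forall y, Om y -> in_Rd d y) -> open_Rd d Om -> convex_set d Om ->
  (exists y, Om y) -> C1_domain_inner_normal d Om nu -> lam0 > 0 ->
  Hinf_def d Om h0 lam0 nu hs -> concave_on_Rd d (ext Om h0 hs).
Proof.
  intros Hin Hop Hcv Hne HC Hl H x y t Hx Hy Ht.
  set (p := vadd (vscal t x) (vscal (1 - t) y)).
  assert (Hp : in_Rd d p) by (apply in_Rd_add; apply in_Rd_scal; auto).
  pose proof (ext_props d Om h0 lam0 nu hs x Hin Hop Hcv Hne HC Hl H Hx) as [Ex1 Ex2].
  pose proof (ext_props d Om h0 lam0 nu hs y Hin Hop Hcv Hne HC Hl H Hy) as [Ey1 Ey2].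
  assert (Hcc : hs p >= t * hs x + (1 - t) * hs y).
  { apply Rle_ge, (proj2 (H p Hp)). intros v [X [HX ->]].
    replace (vsub p X) with (vadd (vscal t (vsub x X)) (vscal (1 - t) (vsub y X))) by (unfold p; pteq).
    rewrite dot_add_r, !dot_scal_r.
    pose proof (hs_upper d Om h0 lam0 nu hs x X H Hx HX).
    pose proof (hs_upper d Om h0 lam0 nu hs y X H Hy HX). nra. }
  unfold ext at 1. fold p. destruct (excluded_middle_informative (Om p)); nra.
Qed.

Lemma bdry_part d Om h0 lam0 nu hs : (forall y, Om y -> in_Rd d y) -> open_Rd d Om -> convex_set d Om ->
  C1_domain_inner_normal d Om nu -> lam0 > 0 ->
  Hinf_def d Om h0 lam0 nu hs -> forall X, bdry d Om X -> hs X = h0.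
Proof.
  intros Hin Hop Hcv HC Hl H X HX. assert (HXi : in_Rd d X) by (destruct HX as [[? _] _]; auto).
  pose proof (hs_upper d Om h0 lam0 nu hs X X H HXi HX). rewrite dot_self0 in H0.
  pose proof (hs_lower d Om h0 lam0 nu hs X X Hin Hop Hcv HC Hl H HXi (proj1 HX)).
  rewrite norm_zero_vec in H1. lra.
Qed.


Lemma ext_out Om h0 u x : ~ Om x -> ext Om h0 u x = u x.
Proof. intro H. unfold ext. destruct (excluded_middle_informative (Om x)); tauto. Qed.

Lemma gamma_part d Om h0 lam0 nu hs : (forall y, Om y -> in_Rd d y) -> open_Rd d Om -> convex_set d Om ->
  (exists y, Om y) -> C1_domain_inner_normal d Om nu -> lam0 > 0 ->
  Hinf_def d Om h0 lam0 nu hs ->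
  forall x0 nu0, Gamma d Om h0 hs x0 -> supp_normal d (pos_set d Om h0 hs) x0 nu0 ->
     (forall n, supp_normal d (pos_set d Om h0 hs) x0 n -> veq d n nu0) ->
     forall eps, eps > 0 -> exists delta, delta > 0 /\
       forall t, 0 < t < delta ->
         Rabs (ext Om h0 hs (vadd x0 (vscal t nu0)) / t - lam0) < eps.
Proof.
  intros Hin Hop Hcv Hne HC Hl H x0 nu0 [Hb Hnc] Hsn Huniq eps Heps.
  assert (Hx0 : in_Rd d x0) by (destruct Hb as [[? _] _]; auto).
  destruct (hs_exact d Om h0 lam0 nu hs x0 Hin Hop Hcv Hne HC Hl H Hx0 Hnc)
    as [X [HXb [Hm [Hdel [Hvar [Hnu Hex]]]]]].
  assert (HXi : in_Rd d X) by (destruct HXb as [[? _] _]; auto).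
  set (a := vsub x0 X) in *. set (del := norm d a) in *.
  assert (Hai : in_Rd d a) by (apply in_Rd_sub; auto).
  destruct (not_closure_sep d Om x0 Hx0 Hnc) as [e0 [He0 Hsep]].
  assert (HnotOm : forall y, norm d (vsub y x0) < e0 -> ~ Om y).
  { intros y Hy Ho. specialize (Hsep y Ho). lra. }
  assert (Hup : forall y, in_Rd d y -> hs y <= hs x0 + lam0 * norm d (vsub y x0)).
  { intros y Hy. pose proof (hs_upper d Om h0 lam0 nu hs y X H Hy HXb). rewrite Hnu in H0.
    replace (vsub y X) with (vadd (vsub y x0) a) in H0 by (unfold a; pteq).
    rewrite dot_add_r, <- norm_sq in H0. fold del in H0.
    pose proof (CS'' d a (vsub y x0)). fold del in H1.
    assert (/ del * (del * del) = del) by (field; lra).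
    assert (/ del * (del * norm d (vsub y x0)) = norm d (vsub y x0)) by (field; lra).
    assert (Hi : / del > 0) by (apply Rinv_0_lt_compat; lra).
    assert (- / del * (dot d a (vsub y x0) + del * del) <= norm d (vsub y x0) - del).
    { assert (/ del * (- dot d a (vsub y x0)) <= / del * (del * norm d (vsub y x0))) by (apply Rmult_le_compat_l; lra).
      nra. }
    nra. }
  assert (Hlo : forall y, in_Rd d y -> hs y >= hs x0 - lam0 * norm d (vsub y x0)).
  { intros y Hy. pose proof (hs_lower d Om h0 lam0 nu hs y X Hin Hop Hcv HC Hl H Hy (proj1 HXb)).
    pose proof (norm_sub_tri d y x0 X). fold a del in H1. nra. }
  assert (Hz1 : hs x0 >= 0).
  { destruct (Rlt_or_le (hs x0) 0) as [Hneg|]; [|lra]. exfalso.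
    destruct Hb as [[_ Hcl] _].
    destruct (Hcl (Rmin e0 (- hs x0 / lam0))) as [y [[Hy Hpos] Hyd]].
    { apply Rmin_pos; [lra| apply Rdiv_lt_0_compat; lra]. }
    assert (Rmin e0 (- hs x0 / lam0) <= e0) by apply Rmin_l.
    assert (Rmin e0 (- hs x0 / lam0) <= - hs x0 / lam0) by apply Rmin_r.
    rewrite ext_out in Hpos by (apply HnotOm; lra).
    specialize (Hup y Hy). assert (- hs x0 / lam0 * lam0 = - hs x0) by (field; lra). nra. }
  assert (Hz2 : hs x0 <= 0).
  { destruct (Rle_or_lt (hs x0) 0) as [|Hp]; [lra|]. exfalso.
    destruct Hb as [_ [_ Hcl]].
    destruct (Hcl (Rmin e0 (hs x0 / lam0))) as [y [[Hy Hnpos] Hyd]].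
    { apply Rmin_pos; [lra| apply Rdiv_lt_0_compat; lra]. }
    assert (Rmin e0 (hs x0 / lam0) <= e0) by apply Rmin_l.
    assert (Rmin e0 (hs x0 / lam0) <= hs x0 / lam0) by apply Rmin_r.
    apply Hnpos. split; auto. rewrite ext_out by (apply HnotOm; lra).
    specialize (Hlo y Hy). assert (hs x0 / lam0 * lam0 = hs x0) by (field; lra). nra. }
  assert (Hh0 : h0 = lam0 * del) by lra.
  set (ns := vscal (- / del) a).
  assert (Hnsi : in_Rd d ns) by (apply in_Rd_scal; auto).
  assert (Hnsa : dot d ns a = - del).
  { unfold ns. rewrite dot_scal_l, <- norm_sq. fold del. field. lra. }
  assert (Hnsn : norm d ns = 1).
  { unfold ns. rewrite norm_scal. fold del. rewrite Rabs_left. field. lra.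
    assert (/ del > 0) by (apply Rinv_0_lt_compat; lra). lra. }
  assert (Hsupp : supp_normal d (pos_set d Om h0 hs) x0 ns).
  { split; auto. split; auto. intros y [Hy Hpos].
    destruct (classic (Om y)) as [Ho|Ho].
    - specialize (Hvar y Ho).
      replace (vsub y x0) with (vsub (vsub y X) a) by (unfold a; pteq).
      unfold ns. rewrite dot_scal_l, dot_sub_r, <- norm_sq. fold del.
      assert (/ del > 0) by (apply Rinv_0_lt_compat; lra).
      assert (- / del * (dot d a (vsub y X) - del * del) = - / del * dot d a (vsub y X) + del) by (field; lra).
      rewrite H1. nra.
    - rewrite ext_out in Hpos by auto.
      pose proof (hs_upper d Om h0 lam0 nu hs y X H Hy HXb). rewrite Hnu in H0.
      replace (vsub y X) with (vadd (vsub y x0) a) in H0 by (unfold a; pteq).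
      assert (- / del * dot d a (vadd (vsub y x0) a) = dot d ns (vsub y x0) - del).
      { unfold ns. rewrite dot_add_r, dot_scal_l, <- norm_sq. fold del. field. lra. }
      rewrite H1 in H0. nra. }
  specialize (Huniq ns Hsupp).
  assert (Hnu0 : nu0 = ns) by (symmetry; apply (veq_in_eq d); auto; destruct Hsn; auto).
  subst nu0.
  exists del. split; [lra|]. intros t Ht.
  set (y := vadd x0 (vscal t ns)).
  assert (Hyi : in_Rd d y) by (apply in_Rd_add; auto; apply in_Rd_scal; auto).
  assert (HyX : vsub y X = vscal (1 - t / del) a).
  { unfold y, ns, a. apply functional_extensionality; intro i; unfold vsub, vadd, vscal. field. lra. }
  assert (HyO : ~ Om y).
  { intro Ho. specialize (Hvar y Ho). rewrite HyX, dot_scal_r, <- norm_sq in Hvar. fold del in Hvar.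
    assert (1 - t / del > 0).
    { assert (t / del < 1). { apply (Rmult_lt_reg_r del); [lra|]. replace (t / del * del) with t by (field; lra). lra. } lra. }
    assert (del * del > 0) by nra. nra. }
  assert (Ht1 : 0 < 1 - t / del).
  { assert (t / del < 1). { apply (Rmult_lt_reg_r del); [lra|]. replace (t / del * del) with t by (field; lra). lra. } lra. }
  assert (Hval : hs y = lam0 * t).
  { pose proof (hs_upper d Om h0 lam0 nu hs y X H Hyi HXb). rewrite Hnu, HyX, dot_scal_r, <- norm_sq in H0.
    fold del in H0.
    pose proof (hs_lower d Om h0 lam0 nu hs y X Hin Hop Hcv HC Hl H Hyi (proj1 HXb)).
    rewrite HyX, norm_scal, Rabs_pos_eq in H1 by lra. fold del in H1.
    assert (- / del * ((1 - t / del) * (del * del)) = - (del - t)) by (field; lra).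
    assert ((1 - t / del) * del = del - t) by (field; lra).
    rewrite H2 in H0. rewrite H3 in H1. nra. }
  rewrite ext_out by auto. fold y. rewrite Hval.
  replace (lam0 * t / t - lam0) with 0 by (field; lra). rewrite Rabs_R0. lra.
Qed.


Lemma grad_sphere d Om h0 lam0 nu hs : (forall y, Om y -> in_Rd d y) -> open_Rd d Om -> convex_set d Om ->
  (exists y, Om y) -> C1_domain_inner_normal d Om nu -> lam0 > 0 ->
  Hinf_def d Om h0 lam0 nu hs -> forall x p, free_region d Om h0 hs x ->
  subgrad d (fun x => - ext Om h0 hs x) (free_region d Om h0 hs) x p ->
  dot d p p = lam0 * lam0.
Proof.
  intros Hin Hop Hcv Hne HC Hl H x p [[Hx Hpos] Hnc] [Hpi Hsg].
  assert (HnOm : forall y, ~ closure d Om y -> ~ Om y).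
  { intros y Hy Ho. apply Hy. apply closure_self; auto. }
  rewrite ext_out in Hpos by auto.
  destruct (hs_exact d Om h0 lam0 nu hs x Hin Hop Hcv Hne HC Hl H Hx Hnc)
    as [X [HXb [Hm [Hdel [Hvar [Hnu Hex]]]]]].
  assert (HXi : in_Rd d X) by (destruct HXb as [[? _] _]; auto).
  set (a := vsub x X) in *. set (del := norm d a) in *.
  assert (Hai : in_Rd d a) by (apply in_Rd_sub; auto).
  pose proof (norm_nonneg d p) as Hp0.
  assert (Hge : norm d p >= lam0).
  { set (s := Rmin (del / 2) (hs x / (2 * lam0))).
    assert (Hs : 0 < s) by (apply Rmin_pos; apply Rdiv_lt_0_compat; lra).
    assert (Hs1 : s <= del / 2) by apply Rmin_l.
    set (y := vadd x (vscal (- (s / del)) a)).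
    assert (Hyi : in_Rd d y) by (apply in_Rd_add; auto; apply in_Rd_scal; auto).
    assert (HyX : vsub y X = vscal (1 - s / del) a).
    { unfold y, a. apply functional_extensionality; intro i; unfold vsub, vadd, vscal. field. lra. }
    assert (Hsd : s / del <= 1 / 2). { unfold Rdiv. apply (Rmult_le_reg_r del); [lra|].
      replace (s * / del * del) with s by (field; lra). lra. }
    assert (Hsd0 : s / del > 0) by (apply Rdiv_lt_0_compat; lra).
    assert (HyXn : norm d (vsub y X) = del - s).
    { rewrite HyX, norm_scal, Rabs_pos_eq by lra. fold del. field. lra. }
    assert (Hync : ~ closure d Om y).
    { intros [_ Hc]. destruct (Hc (del - s)) as [z [Hz Hzd]]. lra.
      specialize (Hm z Hz). pose proof (norm_sub_tri d x y z).
      replace (vsub x y) with (vscal (s / del) a) in H0 by (unfold y; pteq).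
      rewrite norm_scal, Rabs_pos_eq in H0 by lra. fold del in H0.
      rewrite (norm_sub_sym d y z) in H0. fold a del in Hm.
      assert (s / del * del = s) by (field; lra). lra. }
    assert (Hlo : hs y >= h0 - lam0 * (del - s)).
    { rewrite <- HyXn. apply (hs_lower d Om h0 lam0 nu hs y X Hin Hop Hcv HC Hl H Hyi (proj1 HXb)). }
    assert (Hyf : free_region d Om h0 hs y).
    { split; auto. split; auto. rewrite ext_out by auto. nra. }
    specialize (Hsg y Hyf). simpl in Hsg. rewrite !ext_out in Hsg by auto.
    replace (vsub y x) with (vscal (- (s / del)) a) in Hsg by (unfold y; pteq).
    rewrite dot_scal_r in Hsg.
    assert (s / del * dot d p a >= lam0 * s) by lra.
    assert (dot d p a >= lam0 * del).
    { apply Rle_ge, (Rmult_le_reg_l (s / del)); auto.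
      replace (s / del * (lam0 * del)) with (lam0 * s) by (field; lra). lra. }
    pose proof (CS' d p a). fold del in H2. nra. }
  assert (Hle : norm d p <= lam0).
  { destruct (not_closure_sep d Om x Hx Hnc) as [e0 [He0 Hsep]].
    set (s := Rmin (e0 / 2) (hs x / (2 * lam0))).
    assert (Hs : 0 < s) by (apply Rmin_pos; apply Rdiv_lt_0_compat; lra).
    assert (Hs1 : s <= e0 / 2) by apply Rmin_l.
    assert (Hs2 : s <= hs x / (2 * lam0)) by apply Rmin_r.
    assert (Hpn : norm d p > 0) by lra.
    set (y := vadd x (vscal (s / norm d p) p)).
    assert (Hyi : in_Rd d y) by (apply in_Rd_add; auto; apply in_Rd_scal; auto).
    assert (Hyx : vsub y x = vscal (s / norm d p) p) by (unfold y; pteq).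
    assert (Hyxn : norm d (vsub y x) = s).
    { rewrite Hyx, norm_scal, Rabs_pos_eq by (apply Rlt_le, Rdiv_lt_0_compat; lra). field; lra. }
    assert (Hync : ~ closure d Om y).
    { intros [_ Hc]. destruct (Hc (e0 / 2)) as [z [Hz Hzd]]. lra.
      specialize (Hsep z Hz). pose proof (norm_sub_tri d z y x). lra. }
    assert (Hlo : hs y >= h0 - lam0 * (del + s)).
    { pose proof (hs_lower d Om h0 lam0 nu hs y X Hin Hop Hcv HC Hl H Hyi (proj1 HXb)).
      pose proof (norm_sub_tri d y x X). fold a del in H1. nra. }
    assert (Hyf : free_region d Om h0 hs y).
    { split; auto. split; auto. rewrite ext_out by auto.
      assert (hs x / (2 * lam0) * (2 * lam0) = hs x) by (field; lra). nra. }
    specialize (Hsg y Hyf). simpl in Hsg. rewrite !ext_out in Hsg by auto.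
    rewrite Hyx, dot_scal_r, <- norm_sq in Hsg.
    assert (s / norm d p * (norm d p * norm d p) = s * norm d p) by (field; lra).
    rewrite H0 in Hsg.
    pose proof (hs_upper d Om h0 lam0 nu hs y X H Hyi HXb).
    nra. }
  rewrite <- norm_sq. assert (norm d p = lam0) by lra. rewrite H0; ring.
Qed.


Fixpoint digit (N k i : nat) : nat := match i with O => k mod N | S i' => digit N (k / N) i' end.

Lemma digit_exists N m (j : nat -> nat) : (0 < N)%nat -> (forall i, (i < m)%nat -> (j i < N)%nat) ->
  exists k, (k < N ^ m)%nat /\ forall i, (i < m)%nat -> digit N k i = j i.
Proof.
  revert j. induction m; intros j HN Hj.
  - exists 0%nat. simpl. split; [lia|]. intros; lia.
  - destruct (IHm (fun i => j (S i)) HN) as [k' [Hk' Hd]]. intros; apply Hj; lia.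
    exists (j 0%nat + k' * N)%nat. split.
    + simpl. specialize (Hj 0%nat ltac:(lia)). nia.
    + intros [|i] Hi; simpl.
      * rewrite Nat.Div0.mod_add by lia. apply Nat.mod_small, Hj; lia.
      * rewrite Nat.div_add by lia. rewrite Nat.div_small by (apply Hj; lia). simpl. apply Hd; lia.
Qed.

Lemma digit_lt N k i : (0 < N)%nat -> (digit N k i < N)%nat.
Proof. revert k; induction i; intros k HN; simpl. apply Nat.mod_upper_bound; lia. auto. Qed.

Lemma cell_exists (N : nat) h y : (1 <= N)%nat -> h > 0 -> 0 <= y <= INR N * h ->
  exists j, (j < N)%nat /\ INR j * h <= y <= (INR j + 1) * h.
Proof.
  induction N; intros HN Hh Hy; [lia|].
  destruct (Nat.eq_dec N 0) as [->|HN0].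
  - exists 0%nat. split; [lia|]. simpl in *. lra.
  - destruct (Rle_or_lt y (INR N * h)) as [Hle|Hlt].
    + destruct (IHN ltac:(lia) Hh ltac:(lra)) as [j [Hj Hj2]]. exists j; split; auto.
    + exists N. split; [lia|]. rewrite S_INR in Hy. lra.
Qed.

Lemma sqrt_diff a b : Rabs (sqrt a - sqrt b) <= sqrt (Rabs (a - b)).
Proof.
  assert (Hgen : forall a b, b <= a -> Rabs (sqrt a - sqrt b) <= sqrt (Rabs (a - b))).
  { intros x y Hxy. pose proof (sqrt_le_1_alt _ _ Hxy).
    rewrite Rabs_pos_eq by lra. rewrite Rabs_pos_eq by lra.
    destruct (Rle_or_lt y 0) as [Hy|Hy].
    - rewrite (sqrt_neg_0 y Hy), Rminus_0_r. apply sqrt_le_1_alt. lra.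
    - apply sq_le. apply sqrt_pos. rewrite sqrt_sqrt by lra.
      pose proof (sqrt_sqrt x ltac:(lra)). pose proof (sqrt_sqrt y ltac:(lra)).
      pose proof (sqrt_pos y). nra. }
  destruct (Rle_or_lt b a). auto. rewrite <- Rabs_Ropp, (Rabs_minus_sym a b).
  replace (- (sqrt a - sqrt b)) with (sqrt b - sqrt a) by ring. apply Hgen; lra.
Qed.

Lemma dot_diff m u v c : (forall i, (i < m)%nat -> Rabs (u i * u i - v i * v i) <= c) ->
  Rabs (dot m u u - dot m v v) <= INR m * c.
Proof. induction m; intro H; simpl dot. rewrite Rminus_0_r, Rabs_R0; simpl; lra.
  rewrite S_INR. replace (dot m u u + u m * u m - (dot m v v + v m * v m)) with
    ((dot m u u - dot m v v) + (u m * u m - v m * v m)) by ring.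
  eapply Rle_trans. apply Rabs_triang.
  assert (Rabs (dot m u u - dot m v v) <= INR m * c) by (apply IHm; intros; apply H; lia).
  specialize (H m ltac:(lia)).
  lra. Qed.

Lemma box_vol_grid n a b h : (forall i, (i < n)%nat -> b i - a i = h) -> box_vol n a b = h ^ n.
Proof. induction n; intro H; simpl. auto. rewrite IHn, H; [ring|lia|]. intros; apply H; lia. Qed.

Lemma sum_bound (f : nat -> R) K V M : (forall k, 0 <= f k) -> (forall k, (K <= k)%nat -> f k = 0) ->
  (forall k, f k <= V) -> sum_f_R0 f M <= INR K * V.
Proof.
  intros H0 HK HV. assert (0 <= V) by (specialize (H0 0%nat); specialize (HV 0%nat); lra).
  assert (forall M, sum_f_R0 f M <= INR (Nat.min (S M) K) * V).
  { induction M0; simpl sum_f_R0.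
    - destruct K; simpl. rewrite HK by lia. lra. specialize (HV 0%nat). lra.
    - destruct (Nat.le_gt_cases K (S M0)).
      + rewrite HK by lia. rewrite (Nat.min_r (S (S M0)) K) by lia.
        assert (INR (Nat.min (S M0) K) <= INR K) by (apply le_INR; lia). nra.
      + rewrite (Nat.min_l (S (S M0)) K) by lia. rewrite (Nat.min_l (S M0) K) in IHM0 by lia.
        rewrite S_INR. specialize (HV (S M0)). lra. }
  eapply Rle_trans. apply H1. apply Rmult_le_compat_r; auto. apply le_INR; lia.
Qed.


Lemma Rabs_le_between a b : Rabs a <= b -> - b <= a <= b.
Proof. intro H. pose proof (Rle_abs a). pose proof (Rle_abs (- a)). rewrite Rabs_Ropp in H1. lra. Qed.

Definition hN (R : R) (N : nat) := 2 * R / INR N.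
Definition corner m N R c : pt := fun i => if (i <? m)%nat then - R + INR (digit N c i) * hN R N else 0.
Definition fc m N R c := sqrt (R * R - dot m (corner m N R c) (corner m N R c)).
Definition om m N R := sqrt (INR m * (2 * R * hN R N)).
Definition cidx m N k := if (k <? N ^ m)%nat then k else (k - N ^ m)%nat.
Definition csg m N k : R := if (k <? N ^ m)%nat then 1 else -1.
Definition blo m N R (k : nat) : pt := fun i =>
  if (k <? 2 * N ^ m)%nat then
    (if (i <? m)%nat then corner m N R (cidx m N k) i
     else if (i =? m)%nat then csg m N k * fc m N R (cidx m N k) - om m N R else 0)
  else 0.
Definition bhi m N R (k : nat) : pt := fun i =>
  if (k <? 2 * N ^ m)%nat then
    (if (i <? m)%nat then corner m N R (cidx m N k) i + hN R N
     else if (i =? m)%nat then csg m N k * fc m N R (cidx m N k) + om m N R else 0)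
  else 0.

Lemma vol_eq m N R k : (k < 2 * N ^ m)%nat ->
  box_vol (S m) (blo m N R k) (bhi m N R k) = hN R N ^ m * (2 * om m N R).
Proof.
  intro Hk. simpl box_vol. rewrite (box_vol_grid m _ _ (hN R N)).
  - unfold blo, bhi. destruct (Nat.ltb_spec k (2 * N ^ m)); [|lia].
    destruct (Nat.ltb_spec m m); [lia|]. rewrite Nat.eqb_refl. ring.
  - intros i Hi. unfold blo, bhi. destruct (Nat.ltb_spec k (2 * N ^ m)); [|lia].
    destruct (Nat.ltb_spec i m); [ring|lia].
Qed.

Lemma vol_zero m N R k : (2 * N ^ m <= k)%nat -> box_vol (S m) (blo m N R k) (bhi m N R k) = 0.
Proof. intro Hk. simpl box_vol. unfold blo at 2, bhi at 2.
  destruct (Nat.ltb_spec k (2 * N ^ m)); [lia|]. ring. Qed.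

Lemma sphere_null m R : (1 <= m)%nat -> R > 0 -> null_set (S m) (fun p => dot (S m) p p = R * R).
Proof.
  intros Hm HR eps Heps.
  set (C := 4 * (2 * R) ^ m).
  assert (HC : C > 0) by (unfold C; pose proof (pow_lt (2 * R) m ltac:(lra)); lra).
  set (c := (eps / C) ^ 2 / (4 * INR m * R * R + 1)).
  assert (Hmr : 0 <= 4 * INR m * R * R) by (pose proof (pos_INR m); assert (0 <= R * R) by nra; nra).
  assert (Hc : c > 0).
  { unfold c. apply Rdiv_lt_0_compat; [|lra]. apply pow_lt, Rdiv_lt_0_compat; lra. }
  destruct (small_inv c Hc) as [n Hn].
  set (N := S n).
  assert (HNpos : INR N > 0) by (apply lt_0_INR; unfold N; lia).
  set (h := hN R N).
  assert (Hh : h > 0) by (unfold h, hN; apply Rdiv_lt_0_compat; lra).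
  assert (HNh : INR N * h = 2 * R) by (unfold h, hN; field; lra).
  assert (Hom0 : 0 <= om m N R) by apply sqrt_pos.
  exists (blo m N R), (bhi m N R). split; [|split].
  - intros k i Hi. unfold blo, bhi. destruct (Nat.ltb_spec k (2 * N ^ m)); [|lra].
    destruct (Nat.ltb_spec i m). fold h; lra. destruct (Nat.eqb_spec i m); lra.
  - intros p Hp Hs.
    assert (Hpi : forall i, (i < m)%nat -> 0 <= p i + R <= INR N * h).
    { intros i Hi. pose proof (coord_sq (S m) p i ltac:(lia)). rewrite Hs in H.
      rewrite HNh. simpl in H. split; nra. }
    assert (Hj : forall i, exists j, (j < N)%nat /\ ((i < m)%nat -> INR j * h <= p i + R <= (INR j + 1) * h)).
    { intro i. destruct (Nat.ltb_spec i m) as [Hi|Hi].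
      - destruct (cell_exists N h (p i + R) ltac:(unfold N; lia) Hh (Hpi i Hi)) as [j [Hj1 Hj2]].
        exists j; split; auto.
      - exists 0%nat. split. unfold N; lia. intro; lia. }
    set (jf := fun i => proj1_sig (constructive_indefinite_description _ (Hj i))).
    assert (Hjf : forall i, (jf i < N)%nat /\ ((i < m)%nat -> INR (jf i) * h <= p i + R <= (INR (jf i) + 1) * h)).
    { intro i. unfold jf. destruct (constructive_indefinite_description _ (Hj i)); auto. }
    destruct (digit_exists N m jf ltac:(unfold N; lia) ltac:(intros; apply Hjf)) as [k0 [Hk0 Hdig]].
    set (q := corner m N R k0).
    assert (Hq : forall i, (i < m)%nat -> q i = - R + INR (jf i) * h).
    { intros i Hi. unfold q, corner. destruct (Nat.ltb_spec i m); [|lia]. rewrite Hdig; auto. }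
    assert (Hpq : forall i, (i < m)%nat -> Rabs (p i * p i - q i * q i) <= 2 * R * h).
    { intros i Hi. rewrite Hq by auto. destruct (Hjf i) as [Hj1 Hj2]. specialize (Hj2 Hi).
      assert (INR (S (jf i)) <= INR N) by (apply le_INR; lia). rewrite S_INR in H.
      replace (p i * p i - (- R + INR (jf i) * h) * (- R + INR (jf i) * h)) with
        ((p i - (- R + INR (jf i) * h)) * (p i + (- R + INR (jf i) * h))) by ring.
      rewrite Rabs_mult. rewrite (Rmult_comm (2 * R) h). apply Rmult_le_compat; try apply Rabs_pos.
      - apply Rabs_le. lra.
      - pose proof (Hpi i Hi). apply Rabs_le.
        assert (INR (jf i) * h <= (INR N - 1) * h) by (apply Rmult_le_compat_r; lra).
        assert (0 <= INR (jf i) * h) by (apply Rmult_le_pos; [apply pos_INR| lra]).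
        split; nra. }
    pose proof (dot_diff m p q (2 * R * h) Hpq) as Hdd.
    assert (Hsq : p m * p m = R * R - dot m p p) by (simpl in Hs; lra).
    assert (Hclose : Rabs (sqrt (p m * p m) - fc m N R k0) <= om m N R).
    { rewrite Hsq. unfold fc. fold q. eapply Rle_trans. apply sqrt_diff. unfold om. apply sqrt_le_1_alt.
      fold h. replace (R * R - dot m p p - (R * R - dot m q q)) with (- (dot m p p - dot m q q)) by ring.
      rewrite Rabs_Ropp. auto. }
    destruct (Rle_or_lt 0 (p m)) as [Hpm|Hpm].
    + exists k0. intros i Hi. unfold blo, bhi.
      destruct (Nat.ltb_spec k0 (2 * N ^ m)); [|lia].
      unfold cidx, csg. destruct (Nat.ltb_spec k0 (N ^ m)); [|lia]. fold q.
      destruct (Nat.ltb_spec i m) as [Him|Him].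
      * rewrite Hq by auto. destruct (Hjf i) as [_ Hj2]. specialize (Hj2 Him). fold h. lra.
      * assert (i = m) by lia. subst i. rewrite Nat.eqb_refl.
        rewrite sqrt_square in Hclose by lra. apply Rabs_le_between in Hclose. lra.
    + exists (N ^ m + k0)%nat. intros i Hi. unfold blo, bhi.
      destruct (Nat.ltb_spec (N ^ m + k0) (2 * N ^ m)); [|lia].
      unfold cidx, csg. destruct (Nat.ltb_spec (N ^ m + k0) (N ^ m)); [lia|].
      replace (N ^ m + k0 - N ^ m)%nat with k0 by lia. fold q.
      destruct (Nat.ltb_spec i m) as [Him|Him].
      * rewrite Hq by auto. destruct (Hjf i) as [_ Hj2]. specialize (Hj2 Him). fold h. lra.
      * assert (i = m) by lia. subst i. rewrite Nat.eqb_refl.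
        replace (p m * p m) with ((- p m) * (- p m)) in Hclose by ring.
        rewrite sqrt_square in Hclose by lra. apply Rabs_le_between in Hclose. lra.
  - intro M.
    assert (HV : forall k, box_vol (S m) (blo m N R k) (bhi m N R k) <= h ^ m * (2 * om m N R)).
    { intro k. destruct (Nat.ltb_spec k (2 * N ^ m)).
      rewrite vol_eq by auto. fold h. lra. rewrite vol_zero by auto. pose proof (pow_lt h m Hh). nra. }
    eapply Rle_lt_trans. apply (sum_bound _ (2 * N ^ m) (h ^ m * (2 * om m N R))).
    + intro k. destruct (Nat.ltb_spec k (2 * N ^ m)).
      rewrite vol_eq by auto. pose proof (pow_lt h m Hh). fold h. nra. rewrite vol_zero by auto. lra.
    + intros; apply vol_zero; auto.
    + exact HV.
    + rewrite mult_INR, pow_INR. replace (INR 2) with 2 by (simpl; ring).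
      replace (2 * INR N ^ m * (h ^ m * (2 * om m N R))) with (4 * (INR N * h) ^ m * om m N R)
        by (rewrite Rpow_mult_distr; ring).
      rewrite HNh. fold C.
      assert (Hom : om m N R < eps / C).
      { unfold om. fold h. rewrite <- (sqrt_pow2 (eps / C)) by (apply Rlt_le, Rdiv_lt_0_compat; lra).
        apply sqrt_lt_1_alt. split. pose proof (pos_INR m). assert (0 <= 2 * R * h) by nra. nra.
        assert (INR m * (2 * R * h) = 4 * INR m * R * R * / INR N) by (unfold h, hN; field; lra).
        rewrite H. unfold c in Hn. fold N in Hn.
        assert (HX : (eps / C) ^ 2 > 0) by (apply pow_lt, Rdiv_lt_0_compat; lra).
        assert (/ INR N * (4 * INR m * R * R + 1) < (eps / C) ^ 2).
        { apply (Rmult_lt_reg_r (/ (4 * INR m * R * R + 1))). apply Rinv_0_lt_compat; lra.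
          replace (/ INR N * (4 * INR m * R * R + 1) * / (4 * INR m * R * R + 1)) with (/ INR N) by (field; lra).
          exact Hn. }
        assert (/ INR N > 0) by (apply Rinv_0_lt_compat; lra). nra. }
      assert (C * om m N R < C * (eps / C)) by (apply Rmult_lt_compat_l; lra).
      assert (C * (eps / C) = eps) by (field; lra). lra.
Qed.


Lemma null_mono d (S T : pt -> Prop) : null_set d S -> (forall p, in_Rd d p -> T p -> S p) -> null_set d T.
Proof. intros H Hst eps Heps. destruct (H eps Heps) as [a [b [H1 [H2 H3]]]].
  exists a, b. split; auto. Qed.

Theorem proposition2p2 (d : nat) (h0 lam0 : R) (Om : pt -> Prop) (nu : pt -> pt) (hs : pt -> R) :
  (2 <= d)%nat -> h0 > 0 -> lam0 > 0 ->
  (forall x, Om x -> in_Rd d x) -> open_Rd d Om -> (exists x, Om x) ->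
  connected d Om -> convex_set d Om -> bounded_set d Om ->
  C1_domain_inner_normal d Om nu ->
  (forall x, in_Rd d x ->
     is_inf (fun v => exists X, bdry d Om X /\ v = h0 + lam0 * dot d (nu X) (vsub x X)) (hs x)) ->
  weak_solution d Om h0 lam0 hs.
Proof.
  intros Hd Hh0 Hl Hin Hop Hne _ Hcv _ HC Hinf.
  assert (H : Hinf_def d Om h0 lam0 nu hs) by exact Hinf.
  split; [|split; [|split]].
  - apply (concave_part d Om h0 lam0 nu hs); auto.
  - intros E _ HE. destruct d as [|m]; [lia|].
    apply (null_mono _ _ _ (sphere_null m lam0 ltac:(lia) Hl)).
    intros p Hp [x [Hx Hsg]].
    apply (grad_sphere (S m) Om h0 lam0 nu hs Hin Hop Hcv Hne HC Hl H x p (HE x Hx) Hsg).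
  - apply (bdry_part d Om h0 lam0 nu hs); auto.
  - apply (gamma_part d Om h0 lam0 nu hs); auto.
Qed.
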